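(* Let $B$ be a finite set of closed, bounded line segments in $\mathbb{R}^2$, let $B_i$ be one of its connected components, and let $p\in\mathbb{R}^2$. Then every point of $\mathbb{R}^2\setminus (L_p(B_i)\cup B_i)$ is a clear point with respect to $B_i$, i.e., through every such point there passes a line that does not intersect $B_i$.
   Context: The connected components of $B$ are the connected components of the union of its segments; each $B_i$ is a union of segments of $B$, and $\mathrm{Conv}(B_i)$ denotes its convex hull. For a point $p\in\mathbb{R}^2$, the set $L_p(B_i)\subseteq\mathbb{R}^2$ is defined by: (1) if $B_i$ is a single line segment and $p$ is collinear with it, $L_p(B_i)=\emptyset$; (2) otherwise, if $p$ is a vertex of $\mathrm{Conv}(B_i)$, $L_p(B_i)$ is the closed double wedge bounded by the lines supporting the two edges of $\mathrm{Conv}(B_i)$ meeting at $p$ (the double wedge containing $\mathrm{Conv}(B_i)$); (3) otherwise, if $p$ lies in $\mathrm{Conv}(B_i)$ (interior or boundary), $L_p(B_i)=\mathbb{R}^2$; (4) otherwise, $L_p(B_i)$ is the closed double wedge bounded by the two tangent lines from $p$ to $\mathrm{Conv}(B_i)$ (the double wedge containing $\mathrm{Conv}(B_i)$). A point is blocked with respect to a set of segments $S$ if every line through it meets $S$, and clear otherwise. *)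

(* Defs.v *)
From HB Require Import structures.
From mathcomp Require Import all_boot all_order all_algebra.
From mathcomp Require Import all_classical all_reals all_analysis.
Set Implicit Arguments. Unset Strict Implicit. Unset Printing Implicit Defensive.
Import Order.TTheory GRing.Theory Num.Theory.
Import numFieldNormedType.Exports.
Local Open Scope classical_set_scope.
Local Open Scope ring_scope.

Section Geom.
Variable R : realType.
Local Notation pt := (R * R)%type.

Definition det2 (u v : pt) : R := u.1 * v.2 - u.2 * v.1.
Definition vsub (x y : pt) : pt := (x.1 - y.1, x.2 - y.2).
Definition vaxpy (p : pt) (t : R) (d : pt) : pt := (p.1 + t * d.1, p.2 + t * d.2).

Definition seg (a b : pt) : set pt :=
  [set z | exists2 t : R, 0 <= t <= 1 & z = vaxpy a t (vsub b a)].

Definition segs_union (B : seq (pt * pt)) : set pt :=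
  [set z | exists2 s, s \in B & seg s.1 s.2 z].

Definition convex_set (C : set pt) : Prop :=
  forall x y t, C x -> C y -> 0 <= t <= 1 -> C (vaxpy x t (vsub y x)).
Definition conv (S : set pt) : set pt :=
  [set z | forall C, convex_set C -> S `<=` C -> C z].

Definition is_vertex (C : set pt) (p : pt) : Prop :=
  C p /\ ~ (exists x y t, [/\ C x, C y, x <> y, 0 < t < 1 & p = vaxpy x t (vsub y x)]).

Definition single_seg_collinear (S : set pt) (p : pt) : Prop :=
  exists a b, S = seg a b /\ det2 (vsub b a) (vsub p a) = 0.

(* d is the (nonzero) direction of a line through p that supports C
   (C lies in one closed half-plane of it) and touches C at a point other
   than p: for p a vertex of a polygon C these are the lines supporting the
   two edges at p; for p outside C these are the two tangent lines from p. *)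
Definition supp_dir (C : set pt) (p d : pt) : Prop :=
  [/\ d <> (0, 0),
      (forall x, C x -> 0 <= det2 d (vsub x p)) \/
      (forall x, C x -> det2 d (vsub x p) <= 0)
    & exists x, [/\ C x, x <> p & det2 d (vsub x p) = 0]].

(* closed double wedge with apex p bounded by the lines p + R u, p + R v
   (the pair of opposite sectors {p + a u + b v | a b >= 0}) *)
Definition dwedge (p u v : pt) : set pt :=
  [set z | exists a b : R, 0 <= a * b /\
      z = (p.1 + a * u.1 + b * v.1, p.2 + a * u.2 + b * v.2)].

(* the double wedge bounded by the two supporting lines through p,
   namely the one of the two double wedges that contains C *)
Definition wedge_of (C : set pt) (p : pt) : set pt :=
  [set z | exists u v, [/\ supp_dir C p u, supp_dir C p v, det2 u v != 0,
                          C `<=` dwedge p u v & dwedge p u v z]].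

Definition Lp (p : pt) (Bi : set pt) : set pt :=
  [set z |
     (single_seg_collinear Bi p /\ False)
  \/ (~ single_seg_collinear Bi p /\ is_vertex (conv Bi) p /\ wedge_of (conv Bi) p z)
  \/ (~ single_seg_collinear Bi p /\ ~ is_vertex (conv Bi) p /\ conv Bi p)
  \/ (~ single_seg_collinear Bi p /\ ~ is_vertex (conv Bi) p /\ ~ conv Bi p
       /\ wedge_of (conv Bi) p z)].

Definition clear_pt (S : set pt) (q : pt) : Prop :=
  exists2 d : pt, d <> (0, 0) & forall t : R, ~ S (vaxpy q t d).

Definition component_of (B : seq (pt * pt)) (Bi : set pt) : Prop :=
  exists2 x, segs_union B x & Bi = connected_component (segs_union B) x.
End Geom.

(* Main.v *)
Require Import Defs.
From HB Require Import structures.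
From mathcomp Require Import all_boot all_order all_algebra.
From mathcomp Require Import all_classical all_reals all_analysis.
From mathcomp Require Import ring lra.
Import numFieldNormedType.Exports.
Import Order.TTheory GRing.Theory Num.Theory.
Local Open Scope classical_set_scope.
Local Open Scope ring_scope.

Section Helpers.
Variable R : realType.
Local Notation pt := (R * R)%type.

Lemma pt_eq (x y : pt) : x.1 = y.1 -> x.2 = y.2 -> x = y.
Proof. by case: x y => ? ? [? ?] /= -> ->. Qed.

Lemma sq_pos (m : pt) : m <> (0, 0) -> 0 < m.1 * m.1 + m.2 * m.2.
Proof.
case: m => a b /= h.
case: (eqVneq a 0) => [a0|ha].
  case: (eqVneq b 0) => [b0|hb]; first by exfalso; apply: h; rewrite a0 b0.
  have hb2 : 0 < b * b by rewrite -expr2 exprn_even_gt0.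
  nra.
have ha2 : 0 < a * a by rewrite -expr2 exprn_even_gt0.
nra.
Qed.

Definition D (o x y : pt) := det2 (vsub x o) (vsub y o).
Definition dt (o x y : pt) := (vsub x o).1 * (vsub y o).1 + (vsub x o).2 * (vsub y o).2.
Definition comb (o e1 e2 e3 : pt) (a1 a2 a3 : R) :=
  a1 * (vsub e1 o).1 + a2 * (vsub e2 o).1 + a3 * (vsub e3 o).1 = 0 /\
  a1 * (vsub e1 o).2 + a2 * (vsub e2 o).2 + a3 * (vsub e3 o).2 = 0.

Lemma idW o u v w x : D o w x * D o u v = D o x v * D o w u + D o u x * D o w v.
Proof. rewrite /D /det2 /vsub /=; ring. Qed.
Lemma idX o u v w x : D o x w * D o u v = D o x v * D o u w + D o u x * D o v w.
Proof. rewrite /D /det2 /vsub /=; ring. Qed.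
Lemma idC1 o u v w : D o u v * (vsub w o).1 = D o w v * (vsub u o).1 + D o u w * (vsub v o).1.
Proof. rewrite /D /det2 /vsub /=; ring. Qed.
Lemma idC2 o u v w : D o u v * (vsub w o).2 = D o w v * (vsub u o).2 + D o u w * (vsub v o).2.
Proof. rewrite /D /det2 /vsub /=; ring. Qed.
Lemma Dswap o x y : D o x y = - D o y x.
Proof. rewrite /D /det2 /vsub /=; ring. Qed.
Lemma Dself o x : D o x x = 0.
Proof. rewrite /D /det2 /vsub /=; ring. Qed.
Lemma Dor o x : D o x o = 0.
Proof. rewrite /D /det2 /vsub /=; ring. Qed.
Lemma Dol o x : D o o x = 0.
Proof. rewrite /D /det2 /vsub /=; ring. Qed.
Lemma dtor o x : dt o x o = 0.
Proof. rewrite /dt /vsub /=; ring. Qed.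
Lemma lag o u x w : D o x w * dt o u u = dt o u x * D o u w - D o u x * dt o u w.
Proof. rewrite /D /dt /det2 /vsub /=; ring. Qed.
Lemma lagC1 o u w : dt o u u * (vsub w o).1 - dt o u w * (vsub u o).1 = - (vsub u o).2 * D o u w.
Proof. rewrite /D /dt /det2 /vsub /=; ring. Qed.
Lemma lagC2 o u w : dt o u u * (vsub w o).2 - dt o u w * (vsub u o).2 = (vsub u o).1 * D o u w.
Proof. rewrite /D /dt /det2 /vsub /=; ring. Qed.
Lemma dt_ge0 o u : 0 <= dt o u u.
Proof. rewrite /dt; nra. Qed.
Lemma dt_pos o u : u <> o -> 0 < dt o u u.
Proof.
move=> h; rewrite /dt; apply: sq_pos => -[/= h1 h2]; apply: h.
apply: pt_eq; [move/eqP: h1|move/eqP: h2]; rewrite subr_eq0 => /eqP //.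
Qed.

Lemma farkas4 (o : pt) (E : seq pt) :
  (exists (e1 e2 e3 : pt) (a1 a2 a3 : R), [/\ e1 \in E, e2 \in E, e3 \in E & e1 <> o] /\
      [/\ 0 < a1, 0 <= a2, 0 <= a3 & comb o e1 e2 e3 a1 a2 a3])
  \/ (exists eu ev : pt, [/\ eu \in E, ev \in E, 0 < D o eu ev &
         forall e, e \in E -> 0 <= D o eu e /\ 0 <= D o e ev])
  \/ (forall e, e \in E -> e = o)
  \/ (exists eu : pt, [/\ eu \in E, eu <> o &
         forall e, e \in E -> D o eu e = 0 /\ 0 <= dt o eu e]).
Proof.
elim: E => [|w E IH]; first by right; right; left.
have sub : forall e, e \in E -> e \in w :: E by move=> e he; rewrite in_cons he orbT.
have hw : w \in w :: E by rewrite mem_head.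
case: IH => [[e1 [e2 [e3 [a1 [a2 [a3 [[h1 h2 h3 h4] h5]]]]]]] |
   [[eu [ev [hu hv huv hall]]] | [hall | [eu [hu huo hall]]]]].
- left; exists e1, e2, e3, a1, a2, a3; split; last exact: h5.
  by split => //; apply: sub.
- have [g1|g1] := lerP 0 (D o eu w); have [g2|g2] := lerP 0 (D o w ev).
  + right; left; exists eu, ev; split; [exact: sub | exact: sub | done | ].
    by move=> e; rewrite in_cons => /orP[/eqP->|/hall].
  + case: (eqVneq (D o eu w) 0) => g3.
    * left; exists w, eu, ev, (D o eu ev), (- D o w ev), 0; split.
        split; [exact: hw | exact: sub | exact: sub | ].
        by move=> wo; move: g2; rewrite wo Dol ltxx.
      split; [lra | lra | lra | ].
      split; [have := idC1 o eu ev w|have := idC2 o eu ev w]; rewrite g3; lra.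
    * right; left; exists eu, w; split; [exact: sub | exact: hw | lra | ].
      move=> e; rewrite in_cons => /orP[/eqP->|/hall [k1 k2]]; first by rewrite Dself.
      split => //; have := idX o eu ev w e; rewrite (Dswap o ev w); nra.
  + case: (eqVneq (D o w ev) 0) => g3.
    * left; exists w, ev, eu, (D o eu ev), (- D o eu w), 0; split.
        split; [exact: hw | exact: sub | exact: sub | ].
        by move=> wo; move: g1; rewrite wo Dor ltxx.
      split; [lra | lra | lra | ].
      split; [have := idC1 o eu ev w|have := idC2 o eu ev w]; rewrite g3; lra.
    * right; left; exists w, ev; split; [exact: hw | exact: sub | lra | ].
      move=> e; rewrite in_cons => /orP[/eqP->|/hall [k1 k2]]; first by rewrite Dself.
      split => //; have := idW o eu ev w e; rewrite (Dswap o w eu); nra.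
  + left; exists w, eu, ev, (D o eu ev), (- D o w ev), (- D o eu w); split.
      split; [exact: hw | exact: sub | exact: sub | ].
      by move=> wo; move: g1; rewrite wo Dor ltxx.
    split; [lra | lra | lra | ].
    split; [have := idC1 o eu ev w|have := idC2 o eu ev w]; lra.
- case: (pselect (w = o)) => wo.
    right; right; left; move=> e; rewrite in_cons => /orP[/eqP->|/hall] //.
  right; right; right; exists w; split => //.
  move=> e; rewrite in_cons => /orP[/eqP->|/hall ->]; first by rewrite Dself dt_ge0.
  by rewrite Dor dtor.
- case: (ltrgtP (D o eu w) 0) => g.
  + right; left; exists w, eu; split; [exact: hw | exact: sub | rewrite Dswap; lra | ].
    move=> e; rewrite in_cons => /orP[/eqP->|/hall [k1 k2]].
      by rewrite Dself (Dswap o w eu); lra.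
    rewrite (Dswap o e eu) k1 oppr0; split => //.
    have := lag o eu w e; rewrite k1 mulr0 sub0r => hl.
    have := dt_pos o eu huo; nra.
  + right; left; exists eu, w; split; [exact: sub | exact: hw | lra | ].
    move=> e; rewrite in_cons => /orP[/eqP->|/hall [k1 k2]].
      by rewrite Dself; lra.
    rewrite k1; split => //.
    have := lag o eu e w; rewrite k1 mul0r subr0 => hl.
    have := dt_pos o eu huo; nra.
  + case: (lerP 0 (dt o eu w)) => g2.
      right; right; right; exists eu; split; [exact: sub | done | ].
      by move=> e; rewrite in_cons => /orP[/eqP->|/hall].
    left; exists w, eu, eu, (dt o eu eu), (- dt o eu w), 0; split.
      split; [exact: hw | exact: sub | exact: sub | ].
      by move=> wo; move: g2; rewrite wo dtor ltxx.
    split; [exact: dt_pos | lra | lra | ].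
    split; [have := lagC1 o eu w|have := lagC2 o eu w]; rewrite g mulr0; lra.
Qed.

Lemma farkas (o : pt) (E : seq pt) :
  (exists (e1 e2 e3 : pt) (a1 a2 a3 : R), [/\ e1 \in E, e2 \in E, e3 \in E & e1 <> o] /\
      [/\ 0 < a1, 0 <= a2, 0 <= a3 & comb o e1 e2 e3 a1 a2 a3])
  \/ (exists eu ev : pt, [/\ eu \in E, ev \in E, 0 < D o eu ev &
         forall e, e \in E -> 0 <= D o eu e /\ 0 <= D o e ev])
  \/ (exists m : pt, m <> (0, 0) /\ forall e, e \in E -> det2 m (vsub e o) = 0).
Proof.
case: (farkas4 o E) => [h|[h|[h|[eu [hu huo h]]]]]; [by left|by right; left| |].
  right; right; exists (1, 0); split.
    by move=> [/eqP]; rewrite oner_eq0.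
  by move=> e /h ->; rewrite /det2 /vsub /=; ring.
right; right; exists (vsub eu o); split.
  by move=> [h1 h2]; apply: huo; apply: pt_eq; apply/eqP; rewrite -subr_eq0 ?h1 ?h2.
by move=> e /h [].
Qed.

Lemma lin (m o x y : pt) t :
  det2 m (vsub (vaxpy x t (vsub y x)) o) = (1 - t) * det2 m (vsub x o) + t * det2 m (vsub y o).
Proof. rewrite /det2 /vsub /vaxpy /=; ring. Qed.

Lemma hp_ge m o : Defs.convex_set [set z : pt | 0 <= det2 m (vsub z o)].
Proof. move=> x y t /= hx hy /andP[t0 t1]; rewrite lin; nra. Qed.
Lemma hp_le m o : Defs.convex_set [set z : pt | det2 m (vsub z o) <= 0].
Proof. move=> x y t /= hx hy /andP[t0 t1]; rewrite lin; nra. Qed.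
Lemma hp_eq m o : Defs.convex_set [set z : pt | det2 m (vsub z o) = 0].
Proof. move=> x y t /= hx hy _; rewrite lin hx hy; ring. Qed.
Lemma hp_gt m o : Defs.convex_set [set z : pt | 0 < det2 m (vsub z o)].
Proof.
move=> x y t /= hx hy /andP[t0 t1]; rewrite lin.
case: (ltrgtP t 1) => ht; [nra|lra|]; rewrite ht; lra.
Qed.
Lemma convI (A B : set pt) : Defs.convex_set A -> Defs.convex_set B -> Defs.convex_set (A `&` B).
Proof. move=> hA hB x y t [? ?] [? ?] ht; split; [exact: hA|exact: hB]. Qed.
Lemma conv_convex (S : set pt) : Defs.convex_set (Defs.conv S).
Proof. move=> x y t hx hy ht C hC hS; exact: hC _ _ _ (hx C hC hS) (hy C hC hS) ht. Qed.

Lemma vaxpy0 (q d : pt) : vaxpy q 0 d = q.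
Proof. by apply: pt_eq; rewrite /vaxpy /= mul0r addr0. Qed.

Lemma line_clear (S : set pt) (m o q : pt) : m <> (0, 0) ->
  (forall z, S z -> det2 m (vsub z o) = 0) -> det2 m (vsub q o) = 0 -> ~ S q ->
  clear_pt S q.
Proof.
move=> hm hS hq nq; exists (- m.2, m.1).
  move=> [h1 h2]; apply: hm; apply: pt_eq => //=.
  by apply/eqP; rewrite -oppr_eq0 h1.
move=> t hz; have := hS _ hz.
have -> : det2 m (vsub (vaxpy q t (- m.2, m.1)) o) =
   det2 m (vsub q o) + t * (m.1 * m.1 + m.2 * m.2).
  by rewrite /det2 /vsub /vaxpy /=; ring.
rewrite hq add0r => /eqP; rewrite mulf_eq0 => /orP[/eqP t0|].
  by move: hz; rewrite t0 vaxpy0.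
by rewrite gt_eqF // sq_pos.
Qed.

Lemma half_clear (S : set pt) (d q z0 : pt) : S z0 ->
  (forall z, S z -> 0 < det2 d (vsub z q)) -> clear_pt S q.
Proof.
move=> hz0 hS; exists d.
  move=> d0; have := hS _ hz0; rewrite d0 /det2 /=; rewrite !mul0r subr0 ltxx.
  by [].
move=> t hz; have := hS _ hz.
have -> : det2 d (vsub (vaxpy q t d) q) = 0 by rewrite /det2 /vsub /vaxpy /=; ring.
by rewrite ltxx.
Qed.

Lemma comb3 (o e1 e2 e3 : pt) (a1 a2 a3 : R) : e1 <> o -> 0 < a1 -> 0 <= a2 -> 0 <= a3 ->
  comb o e1 e2 e3 a1 a2 a3 ->
  exists (y : pt) (t s : R), [/\ 0 < t < 1, 0 <= s <= 1, y = vaxpy e2 s (vsub e3 e2),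
     e1 <> y & o = vaxpy e1 t (vsub y e1)].
Proof.
move=> he1 h1 h2 h3 [c1 c2].
have hS : 0 < a2 + a3.
  rewrite lt_neqAle addr_ge0 // andbT; apply/negP => /eqP hs.
  have a20 : a2 = 0 by lra.
  have a30 : a3 = 0 by lra.
  move: c1 c2; rewrite a20 a30 !mul0r !addr0 => /eqP c1 /eqP c2.
  apply: he1; move: c1 c2; rewrite !mulf_eq0 !(gt_eqF h1) /= !subr_eq0 => /eqP c1 /eqP c2.
  exact: pt_eq.
set S := a2 + a3; set A := a1 + S.
have hA : 0 < A by rewrite /A; move: hS h1; rewrite -/S; lra.
have nS : S != 0 by rewrite gt_eqF.
have nA : A != 0 by rewrite gt_eqF.
set y := vaxpy e2 (a3 / S) (vsub e3 e2).
have ho1 : o.1 = (a1 * e1.1 + a2 * e2.1 + a3 * e3.1) / A.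
  apply: (mulIf nA); rewrite mulfVK //; move: c1; rewrite /vsub /= /A /S; nra.
have ho2 : o.2 = (a1 * e1.2 + a2 * e2.2 + a3 * e3.2) / A.
  apply: (mulIf nA); rewrite mulfVK //; move: c2; rewrite /vsub /= /A /S; nra.
have hov : o = vaxpy e1 (S / A) (vsub y e1).
  apply: pt_eq; rewrite /y /vaxpy /vsub /= ?ho1 ?ho2; rewrite /A /S; field; rewrite -/S -/A ?nS ?nA //.
exists y, (S / A), (a3 / S); split => //.
- apply/andP; split; first by rewrite divr_gt0.
  by rewrite ltr_pdivrMr // mul1r /A; lra.
- apply/andP; split; first by rewrite divr_ge0 // ltW.
  by rewrite ler_pdivrMr ?mul1r /S; lra.
- move=> hy; apply: he1; rewrite hov -hy; apply: pt_eq; rewrite /vaxpy /vsub /=; ring.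
Qed.

Lemma seg_conn (a b : pt) : connected (seg a b).
Proof.
have -> : seg a b = (fun t : R => vaxpy a t (vsub b a)) @` `[0, 1].
  apply/seteqP; split => z.
    by case=> t ht ->; exists t => //; rewrite in_itv.
  by case=> t; rewrite /= in_itv => ht <-; exists t.
apply: connected_continuous_connected; first exact: segment_connected.
apply: continuous_subspaceT => t /=.
have -> : (fun t0 => vaxpy a t0 (vsub b a)) = (fun t0 => (a.1 + t0 * (vsub b a).1, a.2 + t0 * (vsub b a).2)) by [].
rewrite /continuous_at /=.
have h1 : (fun t0 : R => a.1 + t0 * (vsub b a).1) @ t --> a.1 + t * (vsub b a).1.
  apply: cvgD; first exact: cvg_cst.
  apply: cvgMl; exact: cvg_id.
have h2 : (fun t0 : R => a.2 + t0 * (vsub b a).2) @ t --> a.2 + t * (vsub b a).2.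
  apply: cvgD; first exact: cvg_cst.
  apply: cvgMl; exact: cvg_id.
exact: (cvg_pair h1 h2).
Qed.

Lemma seg0 (a b : pt) : seg a b a.
Proof. exists 0; first by rewrite lexx ler01. by rewrite vaxpy0. Qed.
Lemma seg1 (a b : pt) : seg a b b.
Proof.
exists 1; first by rewrite lexx ler01.
by apply: pt_eq; rewrite /vaxpy /vsub /=; ring.
Qed.

Lemma E_exists (B : seq (pt * pt)) (Bi : set pt) : component_of B Bi ->
  exists E : seq pt, [/\ (exists x, Bi x), (forall e, e \in E -> Bi e) &
    (forall C, Defs.convex_set C -> (forall e, e \in E -> C e) -> Bi `<=` C)].
Proof.
case=> x Ux ->.
set U := segs_union B.
have segU : forall s, s \in B -> seg s.1 s.2 `<=` U by move=> s hs z hz; exists s.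
have segin : forall s z, s \in B -> seg s.1 s.2 z -> connected_component U x z ->
    seg s.1 s.2 `<=` connected_component U x.
  move=> s z hs hz hcz; rewrite (same_connected_component hcz).
  apply: connected_component_max => //; [exact: segU|exact: seg_conn].
have main : forall L : seq (pt * pt), {subset L <= B} -> exists E : seq pt,
    (forall e, e \in E -> connected_component U x e) /\
    (forall s, s \in L -> connected_component U x s.1 -> s.1 \in E /\ s.2 \in E).
  elim => [|s L IH] hsub; first by exists [::].
  have [E [hE1 hE2]] : exists E : seq pt, (forall e, e \in E -> connected_component U x e) /\ (forall s, s \in L -> connected_component U x s.1 -> s.1 \in E /\ s.2 \in E).
    by apply: IH => y hy; apply: hsub; rewrite in_cons hy orbT.
  have hsB : s \in B by apply: hsub; rewrite mem_head.
  case: (pselect (connected_component U x s.1)) => hc.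
    exists (s.1 :: s.2 :: E); split.
      move=> e; rewrite !in_cons => /orP[/eqP->//|/orP[/eqP->|/hE1//]].
      exact: (segin s s.1 hsB (seg0 _ _) hc) (seg1 _ _).
    move=> s'; rewrite in_cons => /orP[/eqP->|hs'] hcs'.
      by rewrite !in_cons !eqxx /= orbT.
    by have [k1 k2] := hE2 _ hs' hcs'; rewrite !in_cons k1 k2 !orbT.
  exists E; split => // s'; rewrite in_cons => /orP[/eqP->|hs'] hcs'; last exact: hE2.
  by exfalso; apply: hc.
have [E [hE1 hE2]] := main B (fun y hy => hy).
exists E; split => //; first by exists x; apply: connected_component_refl.
move=> C hC hCE z hz.
have [s hs hzs] : U z by exact: connected_component_sub hz.
have hsub := segin s z hs hzs hz.
have [k1 k2] := hE2 s hs (hsub _ (seg0 _ _)).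
case: hzs => t ht ->; exact: hC _ _ _ (hCE _ k1) (hCE _ k2) ht.
Qed.

End Helpers.

Arguments D {R}. Arguments dt {R}. Arguments comb {R}.
Arguments idW {R}. Arguments idX {R}. Arguments idC1 {R}. Arguments idC2 {R}.
Arguments Dswap {R}. Arguments Dself {R}. Arguments Dor {R}. Arguments Dol {R}.
Arguments dtor {R}. Arguments lag {R}. Arguments lagC1 {R}. Arguments lagC2 {R}.
Arguments dt_pos {R o u}. Arguments farkas {R}. Arguments lin {R}.
Arguments hp_ge {R}. Arguments hp_le {R}. Arguments hp_eq {R}. Arguments hp_gt {R}.
Arguments convI {R A B}. Arguments conv_convex {R S}. Arguments vaxpy0 {R}.
Arguments line_clear {R S m o q}. Arguments half_clear {R S d q z0}.
Arguments comb3 {R o e1 e2 e3 a1 a2 a3}. Arguments E_exists {R B Bi}.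
Arguments pt_eq {R x y}.

Theorem lemma3 (R : realType) (B : seq ((R * R)%type * (R * R)%type)) (Bi : set ((R * R)%type)) (p : (R * R)%type) :
  component_of B Bi ->
  forall q : (R * R)%type, ~ Lp p Bi q -> ~ Bi q -> clear_pt Bi q.
Proof.
move=> hcomp q hL hq.
have [E [[x0 hx0] hE hEC]] := E_exists hcomp.
case: (pselect (clear_pt Bi q)) => // nc; exfalso.
have convE : forall C, Defs.convex_set C -> (forall e, e \in E -> C e) -> Defs.conv Bi `<=` C.
  by move=> C hC hCE z hz; exact: hz C hC (hEC C hC hCE).
have Econv : forall e, e \in E -> Defs.conv Bi e by move=> e he C _ hC; exact: hC _ (hE e he).
have line_ok : forall m o : R * R, m <> (0, 0) -> (forall e, e \in E -> det2 m (vsub e o) = 0) ->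
    det2 m (vsub q o) = 0 -> False.
  move=> m o hm hEm hqo; apply: nc; apply: (line_clear hm _ hqo hq) => z hz.
  exact: (hEC _ (hp_eq m o) hEm z hz).
have comb_conv : forall (o e1 e2 e3 : R * R) (a1 a2 a3 : R),
    [/\ e1 \in E, e2 \in E, e3 \in E & e1 <> o] ->
    [/\ 0 < a1, 0 <= a2, 0 <= a3 & comb o e1 e2 e3 a1 a2 a3] ->
    Defs.conv Bi o /\ ~ is_vertex (Defs.conv Bi) o.
  move=> o e1 e2 e3 a1 a2 a3 [h1 h2 h3 h4] [h5 h6 h7 hc].
  have [y [t [s [ht hs hy hne ho]]]] := comb3 h4 h5 h6 h7 hc.
  have hcy : Defs.conv Bi y.
    rewrite hy; apply: conv_convex; [exact: Econv|exact: Econv|exact: hs].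
  split.
    rewrite ho; apply: conv_convex; [exact: Econv|exact: hcy|].
    by case/andP: ht => t0 t1; rewrite ltW // ltW.
  move=> [_ hnv]; apply: hnv; exists e1, y, t; split => //; exact: Econv.
have hcq : Defs.conv Bi q.
  case: (farkas q E) => [[e1 [e2 [e3 [a1 [a2 [a3 [hm hc]]]]]]] |
     [[eu [ev [hu hv huv hall]]] | [m [hm hEm]]]].
  - by case: (comb_conv _ _ _ _ _ _ _ hm hc).
  - exfalso; apply: nc.
    pose d : R * R := ((vsub eu q).1 - (vsub ev q).1, (vsub eu q).2 - (vsub ev q).2).
    apply: (half_clear (d := d) hx0).
    apply: hEC; first exact: hp_gt.
    move=> e he; have [k1 k2] := hall e he.
    have -> : det2 d (vsub e q) = D q eu e + D q e ev.
      by rewrite /d /D /det2 /vsub /=; ring.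
    rewrite lt_neqAle addr_ge0 // andbT; apply/negP => /eqP hs.
    have z1 : D q eu e = 0 by lra.
    have z2 : D q e ev = 0 by lra.
    apply: hq; have -> : q = e; last exact: hE.
    have nz : D q eu ev != 0 by rewrite gt_eqF.
    have := idC1 q eu ev e; have := idC2 q eu ev e; rewrite z1 z2 !mul0r addr0.
    move=> /eqP; rewrite mulf_eq0 (negbTE nz) /= subr_eq0 => /eqP c2.
    move=> /eqP; rewrite mulf_eq0 (negbTE nz) /= subr_eq0 => /eqP c1.
    by apply: pt_eq.
  - exfalso; apply: (line_ok m q hm hEm).
    by rewrite /det2 /vsub /= !subrr !mulr0 subrr.
case: (pselect (single_seg_collinear Bi p)) => hssc.
  case: hssc => a [b [hBi _]].
  pose m : R * R := if vsub b a == (0, 0) then (1, 0) else vsub b a.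
  have hm : m <> (0, 0).
    rewrite /m; case: ifPn => [_|/eqP //].
    by move=> [/eqP]; rewrite oner_eq0.
  have hEm : forall e, e \in E -> det2 m (vsub e a) = 0.
    move=> e /hE; rewrite hBi => -[t _ ->].
    have -> : vsub (vaxpy a t (vsub b a)) a = (t * (vsub b a).1, t * (vsub b a).2).
      by apply: pt_eq; rewrite /vaxpy /vsub /=; ring.
    rewrite /m; case: ifPn => [/eqP ->|_]; rewrite /det2 /=; ring.
  apply: (line_ok m a hm hEm).
  exact: convE _ (hp_eq m a) hEm q hcq.
case: (pselect (Defs.conv Bi p /\ ~ is_vertex (Defs.conv Bi) p)) => hcv.
  by apply: hL; right; right; left; split => //; case: hcv.
case: (farkas p E) => [[e1 [e2 [e3 [a1 [a2 [a3 [hm hc]]]]]]] |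
     [[eu [ev [hu hv huv hall]]] | [m [hm hEm]]]].
- by apply: hcv; exact: (comb_conv _ _ _ _ _ _ _ hm hc).
- have nz : D p eu ev != 0 by rewrite gt_eqF.
  have Kc : Defs.conv Bi `<=` [set z | 0 <= det2 (vsub eu p) (vsub z p)] `&`
                              [set z | det2 (vsub ev p) (vsub z p) <= 0].
    apply: convE; first exact: convI (hp_ge _ _) (hp_le _ _).
    move=> e he; have [k1 k2] := hall e he; split => //=.
    by move: k2; rewrite (Dswap p e ev) /D; lra.
  have hW : wedge_of (Defs.conv Bi) p q.
    exists (vsub eu p), (vsub ev p); split.
    + split.
      * by move=> h0; move: nz; rewrite /D h0 /det2 /= !mul0r subrr eqxx.
      * by left => z /Kc [].
      * exists eu; split; [exact: Econv| |exact: Dself].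
        by move=> h0; move: nz; rewrite h0 Dol eqxx.
    + split.
      * by move=> h0; move: nz; rewrite /D h0 /det2 /= !mulr0 subrr eqxx.
      * by right => z /Kc [].
      * exists ev; split; [exact: Econv| |exact: Dself].
        by move=> h0; move: nz; rewrite h0 Dor eqxx.
    + exact: nz.
    + move=> z /Kc [/= k1 k2].
      exists (D p z ev / D p eu ev), (D p eu z / D p eu ev); split.
        apply: mulr_ge0; apply: divr_ge0;
          [by move: k2; rewrite (Dswap p z ev) /D; lra | exact: ltW | exact: k1 | exact: ltW].
      apply: pt_eq => /=.
        have h := idC1 p eu ev z.
        have -> : z.1 = p.1 + D p eu ev * (vsub z p).1 / D p eu ev.
          by rewrite [D p eu ev * _]mulrC mulfK //= addrC subrK.
        rewrite h /vsub /=; field; exact: nz.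
      have h := idC2 p eu ev z.
      have -> : z.2 = p.2 + D p eu ev * (vsub z p).2 / D p eu ev.
        by rewrite [D p eu ev * _]mulrC mulfK //= addrC subrK.
      rewrite h /vsub /=; field; exact: nz.
    + move: (Kc q hcq) => [/= k1 k2].
      exists (D p q ev / D p eu ev), (D p eu q / D p eu ev); split.
        apply: mulr_ge0; apply: divr_ge0;
          [by move: k2; rewrite (Dswap p q ev) /D; lra | exact: ltW | exact: k1 | exact: ltW].
      apply: pt_eq => /=.
        have h := idC1 p eu ev q.
        have -> : q.1 = p.1 + D p eu ev * (vsub q p).1 / D p eu ev.
          by rewrite [D p eu ev * _]mulrC mulfK //= addrC subrK.
        rewrite h /vsub /=; field; exact: nz.
      have h := idC2 p eu ev q.
      have -> : q.2 = p.2 + D p eu ev * (vsub q p).2 / D p eu ev.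
        by rewrite [D p eu ev * _]mulrC mulfK //= addrC subrK.
      rewrite h /vsub /=; field; exact: nz.
  apply: hL; case: (pselect (is_vertex (Defs.conv Bi) p)) => hv'.
    by right; left.
  right; right; right; split => //; split => //; split => //.
  by move=> hp; apply: hcv.
- apply: (line_ok m p hm hEm).
  exact: convE _ (hp_eq m p) hEm q hcq.
Qed.
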